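(* Assume $\eta$ is supported on $\{\mathbf{x}\in E:|\mathbf{x}|_\infty\le R\}$ for some $R>0$. Let $\rho$ be a Borel probability measure on $\mathsf{X}$ and let $Y$ be a discrete-time Markov process on $\mathsf{X}$ with transition kernel $\mu$ and $Y_0\sim\rho$. Let $k_1,k_2$ be nonnegative integers. Then $|f_n(Y_{k_2})-f_n(Y_{k_1})|_\infty\le 2g(Y_0)+(k_1+k_2)R$ almost surely.
   Context: Fix $\theta_a,\theta_d>0$, positive integers $n,N$, $E=\mathbb{R}^N$ with the $\infty$-norm $|\cdot|_\infty$, and a Borel probability measure $\eta$ on $E$ with finite mean. $[k]=\{0,\dots,k-1\}$; $|\psi|=\sum_{i\in[n]}\psi(i)$. State space: $\mathsf{X}=\{(\psi,\mathbf{v})\in\{0,1\}^{[n]}\times E^{[n+1]}:\sum_{i\in[n]}\psi(i)(\mathbf{v}(i)-\mathbf{v}(n))=0\}$ (subspace of the product topology, discrete on $\{0,1\}$, Euclidean on $E$). For $i\in[n]$: $r_i(\psi)=\frac{\theta_d\psi(i)+\theta_a(1-\psi(i))}{\theta_d|\psi|+\theta_a(n-|\psi|)}$; $s_i(\psi)$ agrees with $\psi$ except $s_i(\psi)(i)=1-\psi(i)$. For $\mathsf{x}=(\psi,\mathbf{v})\in\mathsf{X}$, $\lambda_i^{\mathsf{x}}$ is the law of $(s_i(\psi),\mathbf{w})$ with $\mathbf{w}(j)=\mathbf{v}(j)$ for $j\in[n]\setminus\{i\}$ and $(\mathbf{w}(i),\mathbf{w}(n))$ equal to $(\mathbf{v}(i),\mathbf{v}(n))$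 if $|\psi|=\psi(i)=1$; $(\mathbf{v}(i),\mathbf{v}(n)-\frac{\mathbf{v}(i)-\mathbf{v}(n)}{|\psi|-1})$ if $|\psi|>\psi(i)=1$; $(\mathbf{x}+\mathbf{v}(n),\frac{\mathbf{x}}{|\psi|+1}+\mathbf{v}(n))$ with $\mathbf{x}\sim\eta$ if $\psi(i)=0$. $\mu(\mathsf{x},B)=\sum_{i\in[n]}r_i(\psi)\lambda_i^{\mathsf{x}}(B)$. $f_i(\psi,\mathbf{v})=\mathbf{v}(i)$ for $i\in[n+1]$, and $g(\mathsf{x})=\max\{|f_i(\mathsf{x})|_\infty:i\in[n+1]\}$. *)

(* Defs.v *)
From HB Require Import structures.
From mathcomp Require Import all_boot all_order all_algebra.
Import Order.TTheory GRing.Theory Num.Theory.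
From mathcomp Require Import all_classical all_reals all_analysis.
Import numFieldNormedType.Exports.

Set Implicit Arguments.
Unset Strict Implicit.
Unset Printing Implicit Defensive.

Local Open Scope classical_set_scope.
Local Open Scope ring_scope.

(* E = R^N as row vectors; the matrix norm of mathcomp-analysis on 'rV_N is
   the max-norm |.|_oo.  Borel sigma-algebra on E. *)
Definition Espace (R : realType) (N : nat) :=
  g_sigma_algebraType (@open 'rV[R]_N).

(* Ambient space {0,1}^[n] x E^[n+1] with the product topology
   (discrete on bool, Euclidean on E), and its Borel sigma-algebra.
   psi : 'I_n -> bool, v : 'I_n.+1 -> 'rV_N, v(n) = v ord_max. *)
Definition Amb (R : realType) (n N : nat) :=
  ({ptws 'I_n -> bool} * {ptws 'I_n.+1 -> 'rV[R]_N})%type.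
Definition State (R : realType) (n N : nat) :=
  g_sigma_algebraType (@open (Amb R n N)).

Definition card_psi (n : nat) (psi : 'I_n -> bool) : nat :=
  (\sum_(i < n) psi i)%N.

Definition idx (n : nat) (i : 'I_n) : 'I_n.+1 := widen_ord (leqnSn n) i.

Definition Xset (R : realType) (n N : nat) : set (State R n N) :=
  [set x : State R n N | \sum_(i < n) (((x.1 i : bool) : nat)%:R : R) *: (x.2 (idx i) - x.2 ord_max) = 0].

Definition rate (R : realType) (n : nat) (thd tha : R) (psi : 'I_n -> bool)
    (i : 'I_n) : R :=
  (thd * (psi i)%:R + tha * (1 - (psi i)%:R)) /
  (thd * (card_psi psi)%:R + tha * (n - card_psi psi)%:R).

Definition flip (n : nat) (psi : 'I_n -> bool) (i : 'I_n) : 'I_n -> bool :=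
  fun j => if j == i then ~~ psi i else psi j.

(* the vector w of the definition of lambda_i^x; e is the sample x ~ eta,
   used only in the case psi(i) = 0 *)
Definition neww (R : realType) (n N : nat) (psi : 'I_n -> bool)
    (v : 'I_n.+1 -> 'rV[R]_N) (i : 'I_n) (e : 'rV[R]_N) : 'I_n.+1 -> 'rV[R]_N :=
  fun j =>
    if j == idx i then
      (if psi i then v (idx i) else e + v ord_max)
    else if j == ord_max then
      (if psi i then
         (if card_psi psi == 1%N then v ord_max
          else v ord_max - ((card_psi psi)%:R - 1)^-1 *: (v (idx i) - v ord_max))
       else ((card_psi psi)%:R + 1)^-1 *: e + v ord_max)
    else v j.

Definition lam (R : realType) (n N : nat) (eta : probability (Espace R N) R)
    (x : State R n N) (i : 'I_n) (B : set (State R n N)) : \bar R :=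
  if x.1 i then
    \d_((flip x.1 i, neww x.1 x.2 i 0) : State R n N) B
  else
    eta [set e : Espace R N | B (flip x.1 i, neww x.1 x.2 i e)].

Definition mu (R : realType) (n N : nat) (thd tha : R)
    (eta : probability (Espace R N) R) (x : State R n N)
    (B : set (State R n N)) : \bar R :=
  (\sum_(i < n) (rate thd tha x.1 i)%:E * lam eta x i B)%E.

Definition fcoord (R : realType) (n N : nat) (i : 'I_n.+1) (x : State R n N)
  : 'rV[R]_N := x.2 i.
Definition gmax (R : realType) (n N : nat) (x : State R n N) : R :=
  \big[Num.max/0]_(i < n.+1) `|x.2 i|.

(* Y is a discrete-time Markov process (w.r.t. its natural filtration) with
   transition kernel K: for all k and Borel sets A_0, ..., A_{k+1},
   P(Y_0 in A_0, ..., Y_{k+1} in A_{k+1})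
     = E[ 1{Y_0 in A_0, ..., Y_k in A_k} K(Y_k, A_{k+1}) ]. *)
Definition markov_with_kernel (R : realType) (d : measure_display)
    (Omega : measurableType d) (P : probability Omega R)
    (d' : measure_display) (S : measurableType d')
    (K : S -> set S -> \bar R) (Y : nat -> Omega -> S) : Prop :=
  (forall k, measurable_fun setT (Y k)) /\
  forall (k : nat) (A : nat -> set S), (forall j, measurable (A j)) ->
    P (\bigcap_(j in `I_k.+2) (Y j @^-1` A j)) =
    (\int[P]_(w in \bigcap_(j in `I_k.+1) (Y j @^-1` A j)) K (Y k w) (A k.+1))%E.

(* Main.v *)
Require Import Defs.
From HB Require Import structures.
From mathcomp Require Import all_boot all_order all_algebra.
Import Order.TTheory GRing.Theory Num.Theory.
From mathcomp Require Import all_classical all_reals all_analysis.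
Import numFieldNormedType.Exports.
From mathcomp Require Import lra.
Local Open Scope classical_set_scope.
Local Open Scope ring_scope.
Section S.
Variables (R : realType) (n N : nat).
Lemma bool_cont (T : topologicalType) (f : bool -> T) : continuous f.
Proof.
move=> b A /= Ab.
have h : nbhs b [set b] := @discrete_set1 bool b.
apply: (filterS _ h) => x /= ->. exact: nbhs_singleton.
Qed.

Lemma cont_snd (j : 'I_n.+1) : continuous (fun x : Amb R n N => x.2 j).
Proof.
move=> x. apply: (@continuous_comp _ _ _ snd (fun f : {ptws 'I_n.+1 -> 'rV[R]_N} => f j)).
  exact: cvg_snd.
exact: proj_continuous.
Qed.
Lemma cont_fst (j : 'I_n) : continuous (fun x : Amb R n N => x.1 j).
Proof.
move=> x. apply: (@continuous_comp _ _ _ fst (fun f : {ptws 'I_n -> bool} => f j)).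
  exact: cvg_fst.
exact: proj_continuous.
Qed.

Definition good (c : R) : set (State R n N) :=
  [set x | Xset x /\ forall j, `|x.2 j| <= c].

Lemma cont_F : continuous (fun x : Amb R n N =>
  \sum_(i < n) (((x.1 i : bool) : nat)%:R : R) *: (x.2 (idx i) - x.2 ord_max)).
Proof.
rewrite -(fct_sumE _ _ (fun i (x : Amb R n N) => (((x.1 i : bool) : nat)%:R : R) *: (x.2 (idx i) - x.2 ord_max))).
apply: (big_ind (fun f : Amb R n N -> 'rV[R]_N => continuous f)).
- by move=> x; exact: cvg_cst.
- by move=> f g cf cg x; apply: (@continuousD _ _ _ f g x (cf x) (cg x)).
move=> i _ x.
apply: (@continuousZ _ _ _ (fun x : Amb R n N => (((x.1 i : bool) : nat)%:R : R)) (fun x : Amb R n N => x.2 (idx i) - x.2 ord_max)).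
  by apply: (@continuous_comp _ _ _ (fun x : Amb R n N => x.1 i) (fun b : bool => ((b : nat)%:R : R))); [exact: cont_fst | exact: bool_cont].
by apply: continuousB; apply: cont_snd.
Qed.

Lemma closed_good c : closed (good c : set (Amb R n N)).
Proof.
have -> : (good c : set (Amb R n N)) =
  ((fun x : Amb R n N => `|\sum_(i < n) (((x.1 i : bool) : nat)%:R : R) *: (x.2 (idx i) - x.2 ord_max)|) @^-1` [set r | r <= 0])
  `&` \bigcap_(j in [set: 'I_n.+1]) ((fun x : Amb R n N => `|x.2 j|) @^-1` [set r | r <= c]).
  apply/seteqP; split => x /=.
    move=> [h1 h2]; split; first by rewrite /Xset /= in h1; rewrite h1 normr0.
    by move=> j _; apply: h2.
  move=> [h1 h2]; split; last by move=> j; apply: h2.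
  by rewrite /Xset /=; apply/normr0_eq0/le_anti; rewrite h1 normr_ge0.
apply: closedI.
  have hf : continuous (fun x : Amb R n N => `|\sum_(i < n) (((x.1 i : bool) : nat)%:R : R) *: (x.2 (idx i) - x.2 ord_max)|).
    move=> x; apply: (@continuous_comp _ _ _ _ (Num.norm : 'rV[R]_N -> R)).
      exact: cont_F.
    exact: norm_continuous.
  exact: (proj1 (continuous_closedP _) hf _ (@closed_le R 0)).
apply: closed_bigI => j _.
have hf : continuous (fun x : Amb R n N => `|x.2 j|).
  move=> x; apply: (@continuous_comp _ _ _ _ (Num.norm : 'rV[R]_N -> R)).
    exact: cont_snd.
  exact: norm_continuous.
exact: (proj1 (continuous_closedP _) hf _ (@closed_le R c)).
Qed.


Lemma closed_meas (A : set (Amb R n N)) : closed A -> measurable (A : set (State R n N)).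
Proof.
move=> cA. rewrite -[A]setCK. apply: measurableC.
apply: sub_sigma_algebra. by rewrite /= openC.
Qed.

Lemma open_measE (A : set 'rV[R]_N) : open A -> measurable (A : set (Espace R N)).
Proof. by move=> oA; apply: sub_sigma_algebra. Qed.

Lemma neww_affine (psi : 'I_n -> bool) (v : 'I_n.+1 -> 'rV[R]_N) (i : 'I_n) (t : 'I_n.+1) :
  exists (s : R) (a : 'rV[R]_N), forall e, neww psi v i e t = s *: e + a.
Proof.
rewrite /neww; have [h1|h1] := boolP (t == idx i).
  case: (psi i).
    by exists 0, (v (idx i)); move=> e; rewrite scale0r add0r.
  by exists 1, (v ord_max); move=> e; rewrite scale1r.
have [h2|h2] := boolP (t == ord_max); last first.
  by exists 0, (v t); move=> e; rewrite scale0r add0r.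
case: (psi i).
  by exists 0, (if card_psi psi == 1%N then v ord_max
      else v ord_max - ((card_psi psi)%:R - 1)^-1 *: (v (idx i) - v ord_max)); move=> e; rewrite scale0r add0r.
by exists ((card_psi psi)%:R + 1)^-1, (v ord_max).
Qed.

Lemma cont_phi (psi : 'I_n -> bool) (v : 'I_n.+1 -> 'rV[R]_N) (i : 'I_n) :
  continuous (fun e : 'rV[R]_N => ((flip psi i, neww psi v i e) : Amb R n N)).
Proof.
move=> e.
rewrite /continuous_at; have := (@cvg_pair _ _ _ (nbhs e) (nbhs (flip psi i : {ptws _ -> bool})) (nbhs (neww psi v i e : {ptws _ -> _})) _ _ _ (fun=> flip psi i) (neww psi v i)). move=> h. apply: h; first exact: cvg_cst.
apply: (proj2 (@pointwise_cvgP (discrete_topology 'I_n.+1) 'rV[R]_N _ _ _)) => t.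
change ((fun x => neww psi v i x t) @ e --> neww psi v i e t).
have [s [a hsa]] := neww_affine psi v i t.
have -> : (fun x => neww psi v i x t) = (fun x => s *: x + a) by apply: funext => x; rewrite hsa.
rewrite hsa.
apply: (@continuousD _ _ _ (fun x => s *: x) (fun=> a)); last first.
  exact: cst_continuous.
exact: scaler_continuous.
Qed.
Lemma idx_eq (j i : 'I_n) : (idx j == idx i) = (j == i).
Proof. by rewrite -val_eqE /= val_eqE. Qed.
Lemma idx_max (j : 'I_n) : (idx j == ord_max) = false.
Proof. by apply/negbTE; rewrite -val_eqE /= neq_ltn ltn_ord. Qed.

Lemma card_psiE (psi : 'I_n -> bool) (i : 'I_n) :
  (card_psi psi)%:R = (psi i)%:R + \sum_(j < n | j != i) ((psi j : nat)%:R : R).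
Proof. by rewrite /card_psi natr_sum (bigD1 i). Qed.

Lemma sum_split (psi : 'I_n -> bool) (i : 'I_n) (u : 'I_n -> 'rV[R]_N) :
  \sum_(j < n) ((psi j : nat)%:R : R) *: u j =
  (psi i)%:R *: u i + \sum_(j < n | j != i) ((psi j : nat)%:R : R) *: u j.
Proof. by rewrite (bigD1 i). Qed.

Lemma step_good (Rad c : R) (x : State R n N) (i : 'I_n) (e : 'rV[R]_N) :
  0 <= Rad -> good c x -> (x.1 i -> e = 0) -> (~~ x.1 i -> `|e| <= Rad) ->
  good (c + Rad) ((flip x.1 i, neww x.1 x.2 i e) : State R n N).
Proof.
case: x => psi v /= hR [hX hb] he0 heR.
rewrite /Xset /= in hX.
set m := v ord_max.
set V := \sum_(j < n | j != i) ((psi j : nat)%:R : R) *: (v (idx j) - m).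
set S' := \sum_(j < n | j != i) ((psi j : nat)%:R : R).
have hX' : (psi i)%:R *: (v (idx i) - m) + V = 0 by rewrite -sum_split.
have hs := card_psiE psi i; rewrite -/S' in hs.
set w := neww psi v i e.
have wj : forall j, j != i -> w (idx j) = v (idx j).
  by move=> j ji; rewrite /w /neww idx_eq (negbTE ji) idx_max.
have wi : w (idx i) = if psi i then v (idx i) else e + m by rewrite /w /neww eqxx.
have wm : w ord_max = (if psi i then
         (if card_psi psi == 1%N then m
          else m - ((card_psi psi)%:R - 1)^-1 *: (v (idx i) - m))
       else ((card_psi psi)%:R + 1)^-1 *: e + m).
  by rewrite /w /neww eq_sym idx_max eqxx.
have S'ge0 : 0 <= S' by apply: sumr_ge0 => j _; exact: ler0n.
have hsum : forall z, \sum_(j < n) ((flip psi i j : nat)%:R : R) *: (w (idx j) - z) =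
   (~~ psi i)%:R *: (w (idx i) - z) + (V + S' *: (m - z)).
  move=> z; rewrite (bigD1 i) //= /flip eqxx; congr (_ + _).
  rewrite /V /S' scaler_suml -big_split /=; apply: eq_bigr => j ji.
  by rewrite (negbTE ji) wj // -scalerDr addrA subrK.
split.
- rewrite /Xset /= hsum.
  move: hX' hs wi wm; case: (psi i) => /= hX' hs wi wm.
  + rewrite scale0r add0r scale1r in hX' *.
    rewrite wm; case: eqP => [s1|s1].
      rewrite subrr scaler0 addr0.
      have : S' = 0 by apply: (addrI 1); rewrite addr0 -[LHS]hs s1.
      move=> S0; rewrite /V big1 // => j ji.
      have := (psumr_eq0P (fun j _ => ler0n _ (psi j : nat)) S0 ji).
      by move=> ->; rewrite scale0r.
    have hS' : S' = (card_psi psi)%:R - 1 by rewrite hs (addrC 1) addrK.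
    have S'0 : S' != 0.
      rewrite hS' subr_eq0; apply/eqP => h; apply: s1.
      by apply/eqP; rewrite -(eqr_nat R) h.
    rewrite opprB [m + _]addrC subrK -hS' scalerA mulfV // scale1r.
    by rewrite -hX' addrC.
  + rewrite scale0r add0r in hX'. rewrite hX' add0r scale1r wi wm.
    rewrite hs add0r.
    have h1 : S' + 1 != 0 by rewrite gt_eqF // ltr_wpDl.
    set a := (S' + 1)^-1.
    have k1 : forall x y : 'rV[R]_N, x + m - (y + m) = x - y.
      by move=> x y; rewrite opprD addrACA subrr addr0.
    have k2 : m - (a *: e + m) = - (a *: e) by rewrite opprD addrCA subrr addr0.
    rewrite k1 k2 scalerN scalerA -{1}(scale1r e) -!scalerBl.
    have -> : 1 - a - S' * a = 0.
      by rewrite -addrA -opprD -{1}(mul1r a) -mulrDl (addrC 1 S') /a mulfV // subrr.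
    by rewrite scale0r.
- have cc : c <= c + Rad by rewrite lerDl.
  have hb' : forall j, `|v j| <= c := hb.
  move=> j /=; rewrite /w /neww.
  have [ji|ji] := eqVneq j (idx i).
    move: heR; case: (psi i) => heR; first exact: le_trans (hb' _) cc.
    apply: le_trans (ler_normD _ _) _; rewrite addrC; apply: lerD; last exact: heR.
    exact: hb'.
  have [jm|jm] := eqVneq j ord_max; last exact: le_trans (hb' _) cc.
  move: heR hX' hs; case: (psi i) => heR hX' hs /=.
    case: eqP => s1; first exact: le_trans (hb' _) cc.
    rewrite scale1r in hX'.
    have hS' : S' = (card_psi psi)%:R - 1 by rewrite hs (addrC 1) addrK.
    have S'0 : S' != 0.
      rewrite hS' subr_eq0; apply/eqP => h; apply: s1.
      by apply/eqP; rewrite -(eqr_nat R) h.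
    have S'pos : 0 < S' by rewrite lt_def S'0 S'ge0.
    have key : S' *: m + V = \sum_(j < n | j != i) ((psi j : nat)%:R : R) *: v (idx j).
      rewrite /V /S' scaler_suml -big_split; apply: eq_bigr => k _.
      by rewrite /= -scalerDr addrC subrK.
    have nb : `|\sum_(j < n | j != i) ((psi j : nat)%:R : R) *: v (idx j)| <= S' * c.
      apply: le_trans (ler_norm_sum _ _ _) _; rewrite /S' mulr_suml; apply: ler_sum => k _.
      by rewrite normrZ ger0_norm ?ler0n //; apply: ler_wpM2l; [exact: ler0n | exact: hb'].
    have hvi : v (idx i) - m = - V by apply/eqP; rewrite -addr_eq0 hX'.
    rewrite -hS' hvi scalerN opprK.
    have -> : m + S'^-1 *: V = S'^-1 *: (S' *: m + V).
      by rewrite scalerDr scalerA mulVf // scale1r.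
    rewrite key normrZ ger0_norm ?invr_ge0 //.
    apply: le_trans cc; rewrite ler_pdivrMl //.
  apply: le_trans (ler_normD _ _) _; rewrite addrC; apply: lerD; first exact: hb'.
  rewrite normrZ; have hinv : `|((card_psi psi)%:R + 1 : R)^-1| <= 1.
    by rewrite ger0_norm ?invr_ge0 ?addr_ge0 // invf_le1 // ?lerDr ?ltr_wpDl.
  rewrite -[Rad]mul1r; apply: ler_pM => //; exact: heR.
Qed.

Lemma closed_meas_E (A : set 'rV[R]_N) : closed A -> measurable (A : set (Espace R N)).
Proof.
move=> cA. rewrite -[A]setCK. apply: measurableC.
apply: sub_sigma_algebra. by rewrite /= openC.
Qed.

Lemma kernel_zero (thd tha Rad c : R) (eta : probability (Espace R N) R) (x : State R n N) :
  0 <= Rad -> eta [set e : Espace R N | `|e| <= Rad] = 1%E -> good c x ->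
  mu thd tha eta x (~` good (c + Rad)) = 0%E.
Proof.
move=> hR heta gx.
rewrite /mu big1 // => i _.
rewrite /lam; case hi: (x.1 i).
  rewrite diracE; have -> : ((flip x.1 i, neww x.1 x.2 i 0) : State R n N) \in ~` good (c + Rad) = false.
    apply/negbTE/negP => /set_mem /=; apply; apply: step_good hR gx _ _.
      by [].
    by rewrite hi.
  by rewrite mule0.
have mB : measurable (~` [set e : Espace R N | `|e| <= Rad]).
  apply: measurableC; apply: closed_meas_E.
  have hf : continuous (Num.norm : 'rV[R]_N -> R) := @norm_continuous _ _.
  exact: (proj1 (continuous_closedP _) hf _ (@closed_le R Rad)).
have mA : measurable [set e : Espace R N | (~` good (c + Rad)) ((flip x.1 i, neww x.1 x.2 i e) : State R n N)].
  apply: open_measE.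
  have := proj1 (continuousP _) (cont_phi x.1 x.2 i) (~` (good (c + Rad) : set (Amb R n N))).
  apply; rewrite openC; exact: closed_good.
rewrite (@subset_measure0 _ _ _ eta _ _ mA mB) ?mule0 //.
  move=> e /= hng hle; apply: hng; apply: step_good hR gx _ _.
    by rewrite hi.
  by move=> _.
have mS : measurable [set e : Espace R N | `|e| <= Rad] by rewrite -[X in measurable X]setCK; exact: measurableC mB.
have H0 := probability_setC eta mS. rewrite heta subee in H0. exact: H0.
by [].
Qed.

Lemma closed_Xset : closed (@Xset R n N : set (Amb R n N)).
Proof.
have -> : (@Xset R n N : set (Amb R n N)) =
  ((fun x : Amb R n N => `|\sum_(i < n) (((x.1 i : bool) : nat)%:R : R) *: (x.2 (idx i) - x.2 ord_max)|) @^-1` [set r | r <= 0]).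
  apply/seteqP; split => x /=.
    by rewrite /Xset /= => ->; rewrite normr0.
  by rewrite /Xset /= => h1; apply/normr0_eq0/le_anti; rewrite h1 normr_ge0.
have hf : continuous (fun x : Amb R n N => `|\sum_(i < n) (((x.1 i : bool) : nat)%:R : R) *: (x.2 (idx i) - x.2 ord_max)|).
  move=> x; apply: (@continuous_comp _ _ _ _ (Num.norm : 'rV[R]_N -> R)).
    exact: cont_F.
  exact: norm_continuous.
exact: (proj1 (continuous_closedP _) hf _ (@closed_le R 0)).
Qed.

Lemma gmax_ge0 (x : State R n N) : 0 <= gmax x.
Proof. by rewrite /gmax; elim/big_ind: _ => // a b ha hb; rewrite le_max ha. Qed.

Lemma le_gmax (x : State R n N) j : `|x.2 j| <= gmax x.
Proof. by rewrite /gmax (bigD1 j) //= le_max lexx. Qed.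
End S.
Arguments good {R n N}.
Arguments closed_meas {R n N}.
Arguments closed_good {R n N}.
Arguments closed_Xset {R n N}.
Arguments kernel_zero {R n N}.
Arguments gmax_ge0 {R n N}.
Arguments le_gmax {R n N}.


Lemma markov_invariant (R : realType) (d : measure_display)
    (Omega : measurableType d) (P : probability Omega R)
    (d' : measure_display) (S : measurableType d')
    (K : S -> set S -> \bar R) (Y : nat -> Omega -> S)
    (hY : markov_with_kernel P K Y) (A : nat -> set S)
    (mA : forall j, measurable (A j))
    (hK : forall k x, A k x -> K x (~` A k.+1) = 0%E) (k : nat) :
  P.-negligible (Y 0%N @^-1` A 0%N `\` Y k @^-1` A k).
Proof.
case: hY => mY hM.
have mpre : forall j (B : set S), measurable B -> measurable (Y j @^-1` B).
  by move=> j B mB; rewrite -[_ @^-1` _]setTI; exact: (mY j measurableT B mB).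
pose F k := \bigcap_(j in `I_k.+1) (Y j @^-1` A j).
have mF : forall k, measurable (F k).
  by move=> l; apply: bigcap_measurableType => j _; exact: mpre.
suff H : forall k, P.-negligible (Y 0%N @^-1` A 0%N `\` F k).
  apply: (negligibleS _ (H k)) => w /= [h0 hk]; split => // hF; apply: hk.
  by apply: hF => /=.
elim => [|l IH].
  apply: (negligibleS _ (negligible_set0 _)) => w /= [h0 hF]; apply: hF => j /= hj.
  by move: hj; rewrite ltnS leqn0 => /eqP ->.
have sub : Y 0%N @^-1` A 0%N `\` F l.+1 `<=`
    (Y 0%N @^-1` A 0%N `\` F l) `|` (F l `&` Y l.+1 @^-1` ~` A l.+1).
  move=> w [h0 hF]; have [hl|hl] := pselect (F l w); last by left.
  right; split => // hA; apply: hF => j /= hj.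
  move: hj; rewrite ltnS leq_eqVlt => /orP[/eqP ->|hj] //.
  exact: hl.
apply: (negligibleS sub); apply: negligibleU => //.
pose A' j := if j == l.+1 then ~` A l.+1 else A j.
have mA' : forall j, measurable (A' j).
  by move=> j; rewrite /A'; case: ifP => _; [apply: measurableC|].
have := hM l A' mA'.
have -> : \bigcap_(j in `I_l.+2) (Y j @^-1` A' j) = F l `&` Y l.+1 @^-1` ~` A l.+1.
  apply/seteqP; split => w /=.
    move=> h; split.
      move=> j /= hj; have := h j (ltn_trans hj (ltnSn _)).
      by rewrite /A' /= eq_sym (gtn_eqF hj).
    by have := h l.+1 (ltnSn _); rewrite /A' eqxx.
  move=> [hl hc] j /= hj; rewrite /A'; case: eqP => [->|/eqP hne] //.
  by apply: hl => /=; move: hj; rewrite ltnS leq_eqVlt (negbTE hne).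
rewrite integral0_eq.
  move=> h; apply/negligibleP => //; apply: measurableI => //; apply: mpre; exact: measurableC.
move=> w hw; rewrite /A' eqxx; apply: hK.
have := hw l (ltnSn _); rewrite /A' /= eq_sym (gtn_eqF (ltnSn l)) //.
Qed.

Lemma lra_aux (R : realType) (V : normedZmodType R) (a b : V) (g0 Rad c q u eps : R) (k1 k2 : nat) (heps : 0 < eps) (ha : `|a| <= c + k1%:R * Rad)
 (hb : `|b| <= c + k2%:R * Rad) (e1 : `|b - a| <= `|b| + `|a|) (hc2 : c <= g0 + q) (h2 : u < eps) (hq : u = 2 * q) :
  `|b - a| <= 2 * g0 + (k1%:R * Rad + k2%:R * Rad) + eps.
Proof. lra. Qed.

Lemma final_ineq (R : realType) (V : normedZmodType R) (a b : V) (g0 Rad : R) (k1 k2 : nat) : 0 <= g0 ->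
  (forall m p : nat, g0 <= p%:R / (m.+1)%:R ->
     `|a| <= p%:R / (m.+1)%:R + k1%:R * Rad /\ `|b| <= p%:R / (m.+1)%:R + k2%:R * Rad) ->
  `|b - a| <= 2 * g0 + (k1 + k2)%:R * Rad.
Proof.
move=> g0p H.
apply/ler_addgt0Pr => eps heps.
pose m := Num.truncn (2 / eps).
have hm : 2 / eps < (m.+1)%:R by exact: truncnS_gt.
pose p := (Num.truncn (g0 * (m.+1)%:R)).+1.
have m1 : 0 < (m.+1)%:R :> R by rewrite ltr0n.
have hp1 : g0 * (m.+1)%:R < p%:R by exact: truncnS_gt.
have hp2 : (p%:R - 1) <= g0 * (m.+1)%:R.
  by rewrite /p -addn1 natrD addrK truncn_le mulr_ge0 // ltW.
pose c : R := p%:R / (m.+1)%:R.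
have hc1 : g0 <= c by rewrite /c ler_pdivlMr // ltW.
have hc2 : c <= g0 + 1 / (m.+1)%:R.
  rewrite /c ler_pdivrMr // mulrDl divfK ?gt_eqF //; lra.
have h2 : 2 / (m.+1)%:R < eps.
  by rewrite ltr_pdivrMr // mulrC -ltr_pdivrMr.
have [ha hb] : `|a| <= c + k1%:R * Rad /\ `|b| <= c + k2%:R * Rad := H m p hc1.
have e1 : `|b - a| <= `|b| + `|a| by rewrite -(normrN a) ler_normD.
rewrite natrD [(_ + _) * Rad]mulrDl.
have : 2 / (m.+1)%:R = 2 * (1 / (m.+1)%:R) :> R by rewrite mulrA mulr1.
move: hc2 h2; set q := 1 / (m.+1)%:R => hc2 h2 hq.
exact: (@lra_aux R V a b g0 Rad c q (2 / (m.+1)%:R) eps k1 k2 heps ha hb e1 hc2 h2 hq).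
Qed.

Theorem lemma4 (R : realType) (n N : nat) (hn : (0 < n)%N) (hN : (0 < N)%N)
  (tha thd : R) (htha : 0 < tha) (hthd : 0 < thd)
  (eta : probability (Espace R N) R)
  (eta_mean : eta.-integrable setT (fun e : Espace R N => (`|e| : R)%:E))
  (Rad : R) (hRad : 0 < Rad)
  (eta_supp : eta [set e : Espace R N | `|e| <= Rad] = 1%E)
  (rho : probability (State R n N) R) (rho_X : rho (@Xset R n N) = 1%E)
  (d : measure_display) (Omega : measurableType d) (P : probability Omega R)
  (Y : nat -> Omega -> State R n N)
  (hY : markov_with_kernel P (mu thd tha eta) Y)
  (hY0 : forall A : set (State R n N), measurable A ->
           P (Y 0%N @^-1` A) = rho A)
  (k1 k2 : nat) :
  {ae P, forall w, `|fcoord ord_max (Y k2 w) - fcoord ord_max (Y k1 w)|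
                   <= 2 * gmax (Y 0%N w) + (k1 + k2)%:R * Rad}.
Proof.
have hR0 : 0 <= Rad := ltW hRad.
have mpre : forall j (B : set (State R n N)), measurable B -> measurable (Y j @^-1` B).
  by move=> j B mB; rewrite -[_ @^-1` _]setTI; exact: (hY.1 j measurableT B mB).
have mX : measurable (@Xset R n N) := closed_meas _ (@closed_Xset R n N).
have N0 : P.-negligible (~` (Y 0%N @^-1` @Xset R n N)).
  apply/negligibleP; first by apply: measurableC; exact: mpre.
  have H0 := probability_setC P (mpre 0%N _ mX).
  by rewrite hY0 // rho_X subee in H0.
pose cc (m p : nat) : R := p%:R / (m.+1)%:R.
pose NN (k m p : nat) := Y 0%N @^-1` good (cc m p) `\` Y k @^-1` good (cc m p + k%:R * Rad).
have NK : forall k m p, P.-negligible (NN k m p).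
  move=> k m p.
  have := @markov_invariant R d Omega P _ _ (mu thd tha eta) Y hY
    (fun j => good (cc m p + j%:R * Rad)) (fun j => closed_meas _ (closed_good _)) _ k.
  rewrite /= mul0r addr0; apply.
  move=> l x hx.
  have -> : cc m p + l.+1%:R * Rad = cc m p + l%:R * Rad + Rad.
    by rewrite -addn1 natrD mulrDl mul1r addrA.
  exact: kernel_zero.
pose U k := \bigcup_m \bigcup_p NN k m p.
have NU : forall k, P.-negligible (U k).
  by move=> k; apply: negligible_bigcup => m; apply: negligible_bigcup => p; exact: NK.
apply: (negligibleS _ (negligibleU (negligibleU N0 (NU k1)) (NU k2))).
move=> w /= hnot.
have [//|hin] := pselect (((~` (Y 0%N @^-1` @Xset R n N)) `|` U k1 `|` U k2) w).
exfalso; apply: hnot.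
have hX : Xset (Y 0%N w).
  have [//|h] := pselect (Xset (Y 0%N w)).
  by exfalso; apply: hin; left; left.
have hK : forall k m p, good (cc m p) (Y 0%N w) -> k \in [:: k1; k2] -> good (cc m p + k%:R * Rad) (Y k w).
  move=> k m p hg hk.
  have [//|h] := pselect (good (cc m p + k%:R * Rad) (Y k w)).
  exfalso; apply: hin; move: hk; rewrite !inE => /orP[/eqP hk|/eqP hk]; subst k.
    by left; right; exists m => //; exists p.
  by right; exists m => //; exists p.
rewrite /fcoord.
apply: final_ineq; first exact: gmax_ge0.
move=> m p hg.
have hg' : good (cc m p) (Y 0%N w).
  split => // j; exact: le_trans (le_gmax _ j) hg.
split.
  by have [_ /(_ ord_max)] := hK k1 m p hg' (mem_head _ _).
have h2 : k2 \in [:: k1; k2] by rewrite !inE eqxx orbT.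
by have [_ /(_ ord_max)] := hK k2 m p hg' h2.
Qed.
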